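(* Let $N\ge2$ and $0=x_0<x_1<\dots<x_N=1$, $I=[0,1]$, $I_i=[x_{i-1},x_i]$, $|I_i|=x_i-x_{i-1}$, and for $i=1,\dots,N$ let $L_i(x)=x_{i-1}+|I_i|x$ (so $L_i(0)=x_{i-1}$, $L_i(1)=x_i$). Let $\alpha_i,\beta_i,\gamma_i$ be reals with $|\alpha_i|<1$, $|\beta_i|+|\gamma_i|<1$, let $p_i\in \mathrm{Lip}\,\lambda_i$ and $q_i\in\mathrm{Lip}\,\mu_i$ with $0<\lambda_i,\mu_i\le1$, and let $f_1,f_2:I\to\mathbb{R}$ be continuous functions satisfying, for all $x\in I$ and $i=1,\dots,N$, $$f_1(L_i(x))=\alpha_if_1(x)+\beta_if_2(x)+p_i(x),\qquad f_2(L_i(x))=\gamma_if_2(x)+q_i(x).$$ For indices $r_1,\dots,r_m\in\{1,\dots,N\}$ let $I_{r_1r_2\dots r_m}=L_{r_m}\circ L_{r_{m-1}}\circ\dots\circ L_{r_1}(I)$ (so $|I_{r_1\dots r_m}|=|I_{r_1}|\cdots|I_{r_m}|$), with the convention that the empty index gives $I$, and set $b_{r_1\dots r_m}=\int_{I_{r_1\dots r_m}}f_1(x)\,dx$, $a_{r_1\dots r_k}=\int_{I_{r_1\dots r_k}}f_2(x)\,dx$ (so $a$ with empty index is $\int_0^1 f_2$). Then $$b_{r_1r_2\dots r_m}=\sum_{k=1}^{m}\Big(\prod_{j=k+1}^{m}|I_{r_j}|\alpha_{r_j}\Big)|I_{r_k}|\Big(\int_{I_{r_1\dots r_{k-1}}}p_{r_k}(\xi)\,d\xi+\beta_{r_k}a_{r_1\dots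 r_{k-1}}\Big)+\prod_{j=1}^{m}\big(|I_{r_j}|\alpha_{r_j}\big)\int_0^1 f_1(\xi)\,d\xi .$$
   Context: $\mathrm{Lip}\,\lambda$ denotes the class of functions $g$ on $I$ with $|g(x)-g(y)|\le C|x-y|^{\lambda}$ for some constant $C$ and all $x,y\in I$. The functions $f_1,f_2$ arise as the components of the continuous function whose graph is the attractor of the IFS $\omega_i(x,y,z)=(L_i(x),\alpha_iy+\beta_iz+p_i(x),\gamma_iz+q_i(x))$ interpolating generalized data $(x_i,y_i,z_i)$; $f_1$ is the coalescence hidden variable fractal interpolation function. *)

(* Defs.v *)
From Stdlib Require Import Reals Lra.
From Coquelicot Require Import Coquelicot.
Open Scope R_scope.

Definition Lmap (x : nat -> R) (i : nat) (t : R) : R :=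
  x (i - 1)%nat + (x i - x (i - 1)%nat) * t.

Definition len (x : nat -> R) (i : nat) : R := x i - x (i - 1)%nat.

Fixpoint Lcomp (x : nat -> R) (r : nat -> nat) (k : nat) (t : R) : R :=
  match k with
  | O => t
  | S k' => Lmap x (r (S k')) (Lcomp x r k' t)
  end.

(* The interval I_{r_1...r_k} = Lcomp x r k (I) = [Lcomp x r k 0, Lcomp x r k 1]
   (each L_i is increasing); integral over it: *)
Definition int_over (x : nat -> R) (r : nat -> nat) (k : nat) (f : R -> R) : R :=
  RInt f (Lcomp x r k 0) (Lcomp x r k 1).

Fixpoint sum1 (m : nat) (f : nat -> R) : R :=
  match m with
  | O => 0
  | S m' => sum1 m' f + f (S m')
  end.

(* prod_{j=k+1}^{m} f j  (empty product = 1) *)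
Fixpoint prod_from (k m : nat) (f : nat -> R) : R :=
  match m with
  | O => 1
  | S m' => if Nat.leb (S m') k then 1 else prod_from k m' f * f (S m')
  end.

Definition Lip_on_I (lam : R) (g : R -> R) : Prop :=
  exists C : R, forall s t : R, 0 <= s <= 1 -> 0 <= t <= 1 -> s <> t ->
    Rabs (g s - g t) <= C * Rpower (Rabs (s - t)) lam.

Definition continuous_on_I (f : R -> R) : Prop :=
  forall t : R, 0 <= t <= 1 ->
    filterlim f (within (fun y => 0 <= y <= 1) (locally t)) (locally (f t)).

(* Main.v *)
Require Import Defs.
From Stdlib Require Import Reals Lra Lia.
From Coquelicot Require Import Coquelicot.
Open Scope R_scope.

Definition clamp (t : R) : R := Rmax 0 (Rmin 1 t).

Lemma clamp_in t : 0 <= clamp t <= 1.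
Proof. unfold clamp, Rmax, Rmin; repeat destruct Rle_dec; lra. Qed.

Lemma clamp_id t : 0 <= t <= 1 -> clamp t = t.
Proof. intros; unfold clamp, Rmax, Rmin; repeat destruct Rle_dec; lra. Qed.

Lemma clamp_lip s t : Rabs (clamp s - clamp t) <= Rabs (s - t).
Proof. unfold clamp, Rmax, Rmin; repeat destruct Rle_dec;
  unfold Rabs; repeat destruct Rcase_abs; lra. Qed.

Lemma clamp_cont z : continuous clamp z.
Proof.
  apply filterlim_locally. intros eps.
  exists eps. intros y Hy. 
  change (Rabs (clamp y - clamp z) < eps).
  change (Rabs (y - z) < eps) in Hy.
  pose proof (clamp_lip y z). lra.
Qed.

Lemma ext_cont f : continuous_on_I f -> forall z, continuous (fun t => f (clamp t)) z.
Proof.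
  intros Hf z.
  apply (filterlim_comp _ _ _ clamp f _ (within (fun y => 0 <= y <= 1) (locally (clamp z)))).
  - intros P HP. unfold within in HP.
    apply clamp_cont in HP. unfold filtermap in HP |- *.
    eapply filter_imp; [|exact HP]. intros t Ht. apply Ht, clamp_in.
  - apply Hf, clamp_in.
Qed.

Lemma ex_RInt_I f a b : continuous_on_I f -> 0 <= a <= 1 -> 0 <= b <= 1 -> ex_RInt f a b.
Proof.
  intros Hf Ha Hb.
  apply (ex_RInt_ext (fun t => f (clamp t))).
  - intros t Ht. rewrite clamp_id; auto.
    unfold Rmin, Rmax in Ht; destruct Rle_dec; lra.
  - apply (@ex_RInt_continuous R_CompleteNormedModule). intros; apply ext_cont, Hf.
Qed.
Lemma Lmap_cont x i z : continuous (Lmap x i) z.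
Proof.
  unfold Lmap. apply (@continuous_plus R_UniformSpace R_AbsRing R_NormedModule (fun _ => x (i-1)%nat) (fun t => scal (x i - x (i-1)%nat) t)).
  apply continuous_const.
  apply (@continuous_scal_r R_UniformSpace R_AbsRing R_NormedModule). apply continuous_id.
Qed.

Lemma rint_step (f1 f2 pi : R -> R) x i a b u v :
  continuous_on_I f1 -> continuous_on_I f2 ->
  0 <= u <= 1 -> 0 <= v <= 1 ->
  (forall t, 0 <= t <= 1 -> 0 <= Lmap x i t <= 1) ->
  (forall t, 0 <= t <= 1 -> f1 (Lmap x i t) = a * f1 t + b * f2 t + pi t) ->
  RInt f1 (Lmap x i u) (Lmap x i v) =
    len x i * (a * RInt f1 u v + b * RInt f2 u v + RInt pi u v).
Proof.
  intros H1 H2 Hu Hv HL Hf.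
  assert (Huv : forall t, Rmin u v < t < Rmax u v -> 0 <= t <= 1).
  { intros t Ht; unfold Rmin, Rmax in Ht; destruct Rle_dec; lra. }
  assert (E1 : ex_RInt f1 u v) by (apply ex_RInt_I; auto).
  assert (E2 : ex_RInt f2 u v) by (apply ex_RInt_I; auto).
  assert (EL : ex_RInt (fun y => f1 (Lmap x i y)) u v).
  { apply (ex_RInt_ext (fun y => f1 (clamp (Lmap x i (clamp y))))).
    - intros t Ht. rewrite (clamp_id t) by auto.
      rewrite (clamp_id (Lmap x i t)) by (apply HL; auto). reflexivity.
    - apply (@ex_RInt_continuous R_CompleteNormedModule). intros z _.
      apply (continuous_comp _ (fun t => f1 (clamp t))).
      + apply (continuous_comp clamp (Lmap x i)). apply clamp_cont. apply Lmap_cont.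
      + apply ext_cont; auto. }
  assert (EP : ex_RInt pi u v).
  { apply (@ex_RInt_ext R_NormedModule (fun y => minus (minus (f1 (Lmap x i y)) (scal a (f1 y))) (scal b (f2 y)))).
    - intros t Ht. change (f1 (Lmap x i t) - a * f1 t - b * f2 t = pi t).
      rewrite Hf by auto. ring.
    - apply (@ex_RInt_minus R_NormedModule); [apply (@ex_RInt_minus R_NormedModule); [exact EL| apply (@ex_RInt_scal R_NormedModule); exact E1] | apply (@ex_RInt_scal R_NormedModule); exact E2]. }
  replace (Lmap x i u) with (len x i * u + x (i - 1)%nat) by (unfold Lmap, len; ring).
  replace (Lmap x i v) with (len x i * v + x (i - 1)%nat) by (unfold Lmap, len; ring).
  assert (EF : ex_RInt f1 (len x i * u + x (i - 1)%nat) (len x i * v + x (i - 1)%nat)).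
  { apply ex_RInt_I; auto.
    replace (len x i * u + x (i - 1)%nat) with (Lmap x i u) by (unfold Lmap, len; ring); auto.
    replace (len x i * v + x (i - 1)%nat) with (Lmap x i v) by (unfold Lmap, len; ring); auto. }
  rewrite <- (@RInt_comp_lin R_CompleteNormedModule f1 (len x i) (x (i-1)%nat) u v EF).
  rewrite (@RInt_ext R_CompleteNormedModule _ (fun y => len x i * (a * f1 y + b * f2 y + pi y))).
  2:{ intros t Ht. replace (len x i * t + x (i - 1)%nat) with (Lmap x i t) by (unfold Lmap, len; ring).
      rewrite Hf by auto. reflexivity. }
  assert (Ea : ex_RInt (V:=R_NormedModule) (fun y => scal a (f1 y)) u v) by (apply (@ex_RInt_scal R_NormedModule); exact E1).
  assert (Eb : ex_RInt (V:=R_NormedModule) (fun y => scal b (f2 y)) u v) by (apply (@ex_RInt_scal R_NormedModule); exact E2).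
  assert (Eab : ex_RInt (V:=R_NormedModule) (fun y => plus (scal a (f1 y)) (scal b (f2 y))) u v)
    by (apply (@ex_RInt_plus R_NormedModule); assumption).
  assert (Eabp : ex_RInt (V:=R_NormedModule) (fun y => plus (plus (scal a (f1 y)) (scal b (f2 y))) (pi y)) u v)
    by (apply (@ex_RInt_plus R_NormedModule); assumption).
  assert (K1 : RInt (fun y => len x i * (a * f1 y + b * f2 y + pi y)) u v
     = len x i * RInt (fun y => a * f1 y + b * f2 y + pi y) u v)
    by exact (@RInt_scal R_CompleteNormedModule _ u v (len x i) Eabp).
  assert (K2 : RInt (fun y => a * f1 y + b * f2 y + pi y) u v
     = RInt (fun y => a * f1 y + b * f2 y) u v + RInt pi u v)
    by exact (@RInt_plus R_CompleteNormedModule _ _ u v Eab EP).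
  assert (K3 : RInt (fun y => a * f1 y + b * f2 y) u v
     = RInt (fun y => a * f1 y) u v + RInt (fun y => b * f2 y) u v)
    by exact (@RInt_plus R_CompleteNormedModule _ _ u v Ea Eb).
  assert (K4 : RInt (fun y => a * f1 y) u v = a * RInt f1 u v)
    by exact (@RInt_scal R_CompleteNormedModule f1 u v a E1).
  assert (K5 : RInt (fun y => b * f2 y) u v = b * RInt f2 u v)
    by exact (@RInt_scal R_CompleteNormedModule f2 u v b E2).
  rewrite K1, K2, K3, K4, K5. reflexivity.
Qed.
Lemma prod_from_S k n f : (k <= n)%nat -> prod_from k (S n) f = prod_from k n f * f (S n).
Proof. intros H. change (prod_from k (S n) f) with
  (if Nat.leb (S n) k then 1 else prod_from k n f * f (S n)).
  replace (Nat.leb (S n) k) with false; [reflexivity|].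
  symmetry; apply Nat.leb_gt; lia. Qed.

Lemma prod_from_self n f : prod_from (S n) (S n) f = 1.
Proof. change (prod_from (S n) (S n) f) with
  (if Nat.leb (S n) (S n) then 1 else prod_from (S n) n f * f (S n)).
  rewrite Nat.leb_refl. reflexivity. Qed.

Lemma sum1_ext n g h : (forall k, (1 <= k <= n)%nat -> g k = h k) -> sum1 n g = sum1 n h.
Proof. induction n; intros H; simpl; auto.
  rewrite IHn by (intros; apply H; lia). rewrite H by lia. reflexivity. Qed.

Lemma sum1_scal n c g : sum1 n (fun k => c * g k) = c * sum1 n g.
Proof. induction n; simpl. ring. rewrite IHn. ring. Qed.

Section S.
Variables (N : nat) (x : nat -> R) (hx0 : x 0%nat = 0) (hxN : x N = 1)
  (hxinc : forall i : nat, (1 <= i <= N)%nat -> x (i - 1)%nat < x i).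

Lemma x_nonneg j : (j <= N)%nat -> 0 <= x j.
Proof. induction j; intros H. lra. specialize (hxinc (S j)). replace (S j - 1)%nat with j in hxinc by lia.
  assert (x j < x (S j)) by (apply hxinc; lia). specialize (IHj ltac:(lia)). lra. Qed.

Lemma x_le1 d : (d <= N)%nat -> x (N - d)%nat <= 1.
Proof. induction d; intros H. replace (N-0)%nat with N by lia. lra.
  specialize (hxinc (N - d)%nat). replace (N - d - 1)%nat with (N - S d)%nat in hxinc by lia.
  assert (x (N - S d)%nat < x (N - d)%nat) by (apply hxinc; lia). specialize (IHd ltac:(lia)). lra. Qed.

Lemma Lmap_in i t : (1 <= i <= N)%nat -> 0 <= t <= 1 -> 0 <= Lmap x i t <= 1.
Proof. intros Hi Ht. unfold Lmap.
  assert (0 <= x (i-1)%nat) by (apply x_nonneg; lia).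
  assert (x i <= 1) by (replace i with (N - (N - i))%nat by lia; apply x_le1; lia).
  assert (x (i - 1)%nat < x i) by (apply hxinc; lia). nra. Qed.

End S.

Lemma sum1_S n g : sum1 (S n) g = sum1 n g + g (S n).
Proof. reflexivity. Qed.

Theorem lemma3p1
  (N : nat) (HN : (2 <= N)%nat)
  (x : nat -> R) (hx0 : x 0%nat = 0) (hxN : x N = 1)
  (hxinc : forall i : nat, (1 <= i <= N)%nat -> x (i - 1)%nat < x i)
  (alpha beta gamma lam mu : nat -> R)
  (p q : nat -> R -> R) (f1 f2 : R -> R)
  (halpha : forall i : nat, (1 <= i <= N)%nat -> Rabs (alpha i) < 1)
  (hbg : forall i : nat, (1 <= i <= N)%nat -> Rabs (beta i) + Rabs (gamma i) < 1)
  (hlam : forall i : nat, (1 <= i <= N)%nat -> 0 < lam i <= 1)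
  (hmu : forall i : nat, (1 <= i <= N)%nat -> 0 < mu i <= 1)
  (hp : forall i : nat, (1 <= i <= N)%nat -> Lip_on_I (lam i) (p i))
  (hq : forall i : nat, (1 <= i <= N)%nat -> Lip_on_I (mu i) (q i))
  (hf1c : continuous_on_I f1) (hf2c : continuous_on_I f2)
  (hf1 : forall i : nat, (1 <= i <= N)%nat -> forall t : R, 0 <= t <= 1 ->
     f1 (Lmap x i t) = alpha i * f1 t + beta i * f2 t + p i t)
  (hf2 : forall i : nat, (1 <= i <= N)%nat -> forall t : R, 0 <= t <= 1 ->
     f2 (Lmap x i t) = gamma i * f2 t + q i t)
  (m : nat) (r : nat -> nat)
  (hr : forall j : nat, (1 <= j <= m)%nat -> (1 <= r j <= N)%nat) :
  int_over x r m f1 =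
    sum1 m (fun k =>
      prod_from k m (fun j => len x (r j) * alpha (r j)) * len x (r k) *
      (int_over x r (k - 1)%nat (p (r k)) + beta (r k) * int_over x r (k - 1)%nat f2))
    + prod_from 0 m (fun j => len x (r j) * alpha (r j)) * RInt f1 0 1.
Proof.
  set (F := fun j => len x (r j) * alpha (r j)).
  set (c := fun k => len x (r k) *
      (int_over x r (k - 1)%nat (p (r k)) + beta (r k) * int_over x r (k - 1)%nat f2)).
  assert (LC : forall n, (n <= m)%nat -> forall t, 0 <= t <= 1 -> 0 <= Lcomp x r n t <= 1).
  { induction n; intros Hn t Ht; simpl; auto.
    apply (Lmap_in N x hx0 hxN hxinc). apply hr; lia. apply IHn; auto; lia. }
  assert (Main : forall n, (n <= m)%nat -> int_over x r n f1 =
     sum1 n (fun k => prod_from k n F * c k) + prod_from 0 n F * RInt f1 0 1).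
  { induction n; intros Hn.
    - change (int_over x r 0 f1 = 0 + 1 * RInt f1 0 1). unfold int_over; simpl Lcomp. symmetry; etransitivity; [apply Rplus_0_l|apply Rmult_1_l].
    - unfold int_over.
      change (Lcomp x r (S n) 0) with (Lmap x (r (S n)) (Lcomp x r n 0)).
      change (Lcomp x r (S n) 1) with (Lmap x (r (S n)) (Lcomp x r n 1)).
      assert (Hi : (1 <= r (S n) <= N)%nat) by (apply hr; lia).
      rewrite (rint_step f1 f2 (p (r (S n))) x (r (S n)) (alpha (r (S n))) (beta (r (S n))));
        auto.
      2: apply LC; [lia|lra].
      2: apply LC; [lia|lra].
      2: intros; apply (Lmap_in N x hx0 hxN hxinc); auto.
      fold (int_over x r n f1). fold (int_over x r n f2). fold (int_over x r n (p (r (S n)))).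
      rewrite IHn by lia.
      rewrite sum1_S.
      rewrite (sum1_ext n (fun k => prod_from k (S n) F * c k) (fun k => F (S n) * (prod_from k n F * c k))).
      2:{ intros k Hk. rewrite prod_from_S by lia. ring. }
      rewrite sum1_scal, prod_from_self. rewrite (prod_from_S 0 n) by lia.
      replace (c (S n)) with (len x (r (S n)) * (int_over x r n (p (r (S n))) + beta (r (S n)) * int_over x r n f2))
        by (unfold c; replace (S n - 1)%nat with n by lia; reflexivity).
      replace (F (S n)) with (len x (r (S n)) * alpha (r (S n))) by reflexivity.
      generalize (sum1 n (fun k => prod_from k n F * c k)). intro S0.
      generalize (RInt f1 0 1). intro I0. change R in I0.
      ring. }
  rewrite (Main m) by lia. f_equal. apply sum1_ext. intros k _. unfold c. ring.
Qed.
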